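(* Let $X$ be a compact metric space, $f\colon X\to X$ continuous, and let $S\in 2^X$ be a periodic point of $2^f$ with fundamental period $k$. Then for every $0<j<k$, $f^j(S)\not\subseteq S$.
   Context: $2^X$ is the space of nonempty closed subsets of $X$ with the Hausdorff metric and $2^f(C)=f(C)$; $f^j(S)=(2^f)^j(S)$. *)

(* Defs.v *)
From HB Require Import structures.
From mathcomp Require Import all_boot all_order all_algebra.
From mathcomp Require Import all_classical all_reals all_analysis.
Set Implicit Arguments. Unset Strict Implicit. Unset Printing Implicit Defensive.
Import Order.TTheory GRing.Theory Num.Theory.
Local Open Scope classical_set_scope.

Definition in_hyperspace {T : topologicalType} (C : set T) : Prop :=
  C !=set0 /\ closed C.

Definition hypermap {T : Type} (f : T -> T) (C : set T) : set T := f @` C.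

Definition hyperiter {T : Type} (f : T -> T) (j : nat) (S : set T) : set T :=
  iter j (hypermap f) S.

Definition hyper_periodic_fund {T : Type} (f : T -> T) (S : set T) (k : nat) : Prop :=
  (0 < k)%N /\ hyperiter f k S = S /\
  (forall j : nat, (0 < j)%N -> (j < k)%N -> hyperiter f j S <> S).

(* Main.v *)
Require Import Defs.
From HB Require Import structures.
From mathcomp Require Import all_boot all_order all_algebra.
From mathcomp Require Import all_classical all_reals all_analysis.
Local Open Scope classical_set_scope.

Lemma hyperiterD {T : Type} (f : T -> T) a b S :
  hyperiter f (a + b) S = hyperiter f a (hyperiter f b S).
Proof. by rewrite /hyperiter iterD. Qed.

Lemma hyperiter_mono {T : Type} (f : T -> T) n (A B : set T) :
  A `<=` B -> hyperiter f n A `<=` hyperiter f n B.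
Proof.
move=> AB; elim: n => [|n IH] //=.
rewrite /hyperiter /= /hypermap; exact: image_subset.
Qed.

Lemma hyperiter_mulk {T : Type} (f : T -> T) k S :
  hyperiter f k S = S -> forall n, hyperiter f (n * k) S = S.
Proof.
move=> hk; elim => [|n IH] //.
by rewrite mulSn hyperiterD IH hk.
Qed.

Theorem lemma4p5 (R : realType) (X : metricType R) (f : X -> X)
  (hX : compact [set: X]) (hf : continuous f)
  (S : set X) (hS : in_hyperspace S) (k : nat)
  (hper : hyper_periodic_fund f S k) :
  forall j : nat, (0 < j)%N -> (j < k)%N -> ~ (hyperiter f j S `<=` S).
Proof.
move=> j j0 jk sub.
case: hper => k0 [hk hmin].
have Q : forall m, hyperiter f (m.+1 * j) S `<=` hyperiter f j S.
  elim => [|m IH]; first by rewrite mul1n.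
  rewrite mulSn addnC hyperiterD.
  apply: subset_trans IH.
  exact: hyperiter_mono.
apply: (hmin j j0 jk).
apply/seteqP; split => //.
have := Q k.-1; rewrite prednK // mulnC hyperiter_mulk //.
Qed.
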